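(* Let $w\in\mathcal W$ and $\rho_c>0$. Let $\gamma_c^\star>0$ be a solution of \[\Psi\big(\widehat\theta_c-\gamma^{-1}\lambda(w,\widehat x_c)\big)+\gamma^{-1}\big\langle\nabla\Psi\big(\widehat\theta_c-\gamma^{-1}\lambda(w,\widehat x_c)\big),\lambda(w,\widehat x_c)\big\rangle=\Psi(\widehat\theta_c)-\rho_c,\] and $\theta_c^\star=\widehat\theta_c-\lambda(w,\widehat x_c)/\gamma_c^\star$. Then the supremum $\sup_{\mathbb Q\in\mathbb B_{Y|\widehat x_c}}\mathbb E_{\mathbb Q}[\ell_\lambda(\widehat x_c,Y,w)]$ is attained by the distribution $\mathbb Q^\star_{Y|\widehat x_c}$ with density $f(\cdot|\theta_c^\star)$.
   Context: Exponential family: $\nu$ a measure on $\mathcal Y\subseteq\mathbb R^m$, $h\ge0$, $T:\mathcal Y\to\mathbb R^p$; $f(y|\theta)=h(y)\exp(\langle\theta,T(y)\rangle-\Psi(\theta))$ density w.r.t. $\nu$; $\Theta=\{\theta\in\mathbb R^p:\int he^{\langle\theta,T\rangle}d\nu<\infty\}$, $\Psi(\theta)=\log\int he^{\langle\theta,T\rangle}d\nu$; regular family ($\Theta$ open, $T_i$ affinely independent). $\mathcal X\subseteq\mathbb R^n$, $\widehat x_c\in\mathcal X$, $\mathcal W$ finite-dimensional, $\lambda:\mathcal W\times\mathcal X\to\Theta$ jointly continuous; $\ell_\lambda(x,y,w)=\Psi(\lambda(w,x))-\langle T(y),\lambda(w,x)\rangle$. $\widehat\theta_c\in\Theta$. KL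 divergence $\mathrm{KL}(\mathbb P_1\|\mathbb P_2)=\mathbb E_{\mathbb P_1}[\log d\mathbb P_1/d\mathbb P_2]$. $\mathbb B_{Y|\widehat x_c}$ is the set of distributions on $\mathcal Y$ with density $f(\cdot|\theta)$ for some $\theta\in\Theta$ satisfying $\mathrm{KL}(f(\cdot|\theta)\|f(\cdot|\widehat\theta_c))\le\rho_c$. *)

(* Defs.v *)
From HB Require Import structures.
From mathcomp Require Import all_boot all_order all_algebra.
From mathcomp Require Import all_classical all_reals all_analysis.
Import Order.TTheory GRing.Theory Num.Theory.
Import numFieldNormedType.Exports.
Set Implicit Arguments.
Unset Strict Implicit.
Unset Printing Implicit Defensive.
Local Open Scope classical_set_scope.
Local Open Scope ring_scope.

Definition dotv (R : ringType) (p : nat) (a b : 'rV[R]_p) : R :=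
  \sum_(i < p) a 0 i * b 0 i.

Definition borelRV (R : realType) (m : nat) :=
  g_sigma_algebraType (@open 'rV[R]_m).

Section ExpFam.
Context (R : realType) (m p : nat).
Context (nu : {measure set (borelRV R m) -> \bar R}).
Context (Ys : set (borelRV R m)) (h : borelRV R m -> R)
        (T : borelRV R m -> 'rV[R]_p).

Definition partition_int (theta : 'rV[R]_p) : \bar R :=
  (\int[nu]_(y in Ys) (h y * expR (dotv theta (T y)))%:E)%E.

Definition Theta : set 'rV[R]_p :=
  [set theta | (partition_int theta < +oo)%E].

Definition Psi (theta : 'rV[R]_p) : R := ln (fine (partition_int theta)).

Definition gradPsi (theta : 'rV[R]_p) : 'rV[R]_p :=
  \row_(i < p) derive Psi theta (delta_mx 0 i : 'rV[R]_p).

Definition fdens (theta : 'rV[R]_p) (y : borelRV R m) : R :=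
  h y * expR (dotv theta (T y) - Psi theta).

(* regular family: Theta open and T_1..T_p affinely independent, i.e. no
   nontrivial affine relation <a,T> = c holds (h nu)-almost everywhere *)
Definition regular_family : Prop :=
  open Theta /\
  (forall (a : 'rV[R]_p) (c : R),
      {ae nu, forall y, Ys y -> 0 < h y -> dotv a (T y) = c} ->
      a = 0 /\ c = 0).

Definition KL_fam (theta1 theta2 : 'rV[R]_p) : \bar R :=
  (\int[nu]_(y in Ys)
     (fdens theta1 y * ln (fdens theta1 y / fdens theta2 y))%:E)%E.

Definition E_fam (theta : 'rV[R]_p) (g : borelRV R m -> R) : \bar R :=
  (\int[nu]_(y in Ys) (g y * fdens theta y)%:E)%E.

(* the KL ball B_{Y|xhat}, indexed by the parameters of its members *)
Definition KL_ball (thetahat : 'rV[R]_p) (rho : R) : set 'rV[R]_p :=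
  [set theta | Theta theta /\ (KL_fam theta thetahat <= rho%:E)%E].

Definition loss_lam (k n : nat) (lam : 'rV[R]_k -> 'rV[R]_n -> 'rV[R]_p)
  (x : 'rV[R]_n) (y : borelRV R m) (w : 'rV[R]_k) : R :=
  Psi (lam w x) - dotv (T y) (lam w x).

End ExpFam.

(* Main.v *)
Require Import Defs.
From HB Require Import structures.
From mathcomp Require Import all_boot all_order all_algebra.
From mathcomp Require Import all_classical all_reals all_analysis.
From mathcomp Require Import measurable_realfun lra ring.
Import Order.TTheory GRing.Theory Num.Theory.
Import numFieldNormedType.Exports.
Local Open Scope classical_set_scope.
Local Open Scope ring_scope.
Set Implicit Arguments.
Unset Strict Implicit.
Unset Printing Implicit Defensive.
Lemma dexp (R : realType) (u : R) : derivable expR u 1.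
Proof. by have [] := is_derive_expR u. Qed.
Lemma is_derive_expRM (R : realType) (x t : R) :
  is_derive t 1 (fun s : R => expR (s * x)) (expR (t * x) * x).
Proof.
have dl : forall u : R, derivable (fun s : R => s * x) u 1.
  move=> u; apply: derivableM => //; exact: derivable_id.
have der : derivable (fun s : R => expR (s * x)) t 1.
  apply/derivable1_diffP; apply: (@differentiable_comp _ _ _ _ (fun s : R => s * x) expR).
    exact/derivable1_diffP.
  by apply/derivable1_diffP; exact: dexp.
apply: DeriveDef => //.
rewrite -derive1E (@derive1_comp R (fun s : R => s * x) expR t (dl t) (@dexp R (t * x))).
rewrite derive1E derive_val derive1E.
have -> : ( *%R^~ x) = ((@id R) * cst x)%R by apply/funext.
rewrite derive_val /= scaler0 add0r; congr (_ * _); exact: mulr1.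
Qed.
Lemma is_derive_cexp (R : realType) (c x t : R) :
  is_derive t 1 (fun s : R => c * expR (s * x)) (c * (expR (t * x) * x)).
Proof.
have -> : (fun s : R => c * expR (s * x)) = (cst c * (fun s => expR (s * x)))%R by apply/funext.
have H := @is_derive_expRM R x t.
apply: is_derive_eq.
by rewrite scaler0 addr0.
Qed.

Lemma expR_abs_le (R : realType) (z : R) : expR `|z| <= expR z + expR (- z).
Proof.
have [z0|z0] := lerP 0 z.
  by rewrite ger0_norm // lerDl expR_ge0.
by rewrite ltr0_norm // lerDr expR_ge0.
Qed.

Lemma abs_le_exp (R : realType) (d x : R) : 0 < d ->
  d * `|x| <= expR (d * x) + expR (- (d * x)).
Proof.
move=> d0.
have h1 : d * `|x| <= expR (d * `|x|).
  by have := expR_ge1Dx (d * `|x|); lra.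
apply: (le_trans h1).
by rewrite -[d in d * `|x|]gtr0_norm // -normrM expR_abs_le.
Qed.

Lemma absexp_le (R : realType) (d t x : R) : 0 < d -> `|t| <= d ->
  `|x| * expR (t * x) <= (expR (2 * d * x) + expR (- (2 * d * x))) / d.
Proof.
move=> d0 td.
rewrite ler_pdivlMr // mulrC mulrA.
have e1 : expR (t * x) <= expR (d * `|x|).
  rewrite ler_expR; apply: (le_trans (ler_norm _)).
  by rewrite normrM ler_wpM2r.
have e2 : d * `|x| <= expR (d * `|x|).
  by have := expR_ge1Dx (d * `|x|); lra.
have e3 : d * `|x| * expR (t * x) <= expR (d * `|x|) * expR (d * `|x|).
  by apply: (@ler_pM R) => //; exact: mulr_ge0 (ltW d0) (normr_ge0 x).
rewrite -expRD in e3; apply: (le_trans e3).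
have -> : d * `|x| + d * `|x| = `|2 * d * x|.
  by rewrite !normrM (gtr0_norm d0) ger0_norm //; lra.
exact: expR_abs_le.
Qed.

Section Dot.
Variables (R : comRingType) (p : nat).
Implicit Types a b c : 'rV[R]_p.
Lemma dotvC a b : dotv a b = dotv b a.
Proof. by apply: eq_bigr => i _; rewrite mulrC. Qed.
Lemma dotvDl a b c : dotv (a + b) c = dotv a c + dotv b c.
Proof. by rewrite /dotv -big_split; apply: eq_bigr => i _; rewrite !mxE mulrDl. Qed.
Lemma dotvZl k a b : dotv (k *: a) b = k * dotv a b.
Proof. by rewrite /dotv mulr_sumr; apply: eq_bigr => i _; rewrite !mxE mulrA. Qed.
Lemma dotvNl a b : dotv (- a) b = - dotv a b.
Proof. by rewrite -scaleN1r dotvZl mulN1r. Qed.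
Lemma dotvBl a b c : dotv (a - b) c = dotv a c - dotv b c.
Proof. by rewrite dotvDl dotvNl. Qed.
Lemma dotv0l b : dotv 0 b = 0.
Proof. by rewrite /dotv big1 // => i _; rewrite mxE mul0r. Qed.
Lemma dotv_delta (i : 'I_p) b : dotv (delta_mx 0 i) b = b 0 i.
Proof.
rewrite /dotv (bigD1 i) //= big1 ?addr0; first by rewrite mxE !eqxx mul1r.
by move=> j ji; rewrite mxE eqxx /= (negbTE ji) mul0r.
Qed.
End Dot.
Section EF.
Variables (R : realType) (m p : nat).
Variable (nu : {measure set (borelRV R m) -> \bar R}).
Variables (Ys : set (borelRV R m)) (mYs : measurable Ys).
Variables (h : borelRV R m -> R) (T : borelRV R m -> 'rV[R]_p).
Hypotheses (mh : measurable_fun Ys h) (h_ge0 : forall y, Ys y -> 0 <= h y)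
  (mT : forall i : 'I_p, measurable_fun Ys (fun y => T y 0 i))
  (Hreg : regular_family nu Ys h T).

Local Notation Th := (Theta nu Ys h T).
Local Notation Ps := (Psi nu Ys h T).
Definition gf (th : 'rV[R]_p) (y : borelRV R m) : R := h y * expR (dotv th (T y)).

Lemma mdot a : measurable_fun Ys (fun y => dotv a (T y)).
Proof.
rewrite /dotv; apply: measurable_sum => i.
by apply: measurable_funM => //; exact: measurable_cst.
Qed.

Lemma mgf th : measurable_fun Ys (gf th).
Proof.
apply: measurable_funM => //.
by apply: measurableT_comp; [exact: measurable_expR | exact: mdot].
Qed.

Lemma gf_ge0 th y : Ys y -> 0 <= gf th y.
Proof. by move=> Yy; rewrite mulr_ge0 ?expR_ge0 ?h_ge0. Qed.

Lemma int_gf th : Th th -> nu.-integrable Ys (EFin \o gf th).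
Proof.
move=> Hth; apply/integrableP; split; first by apply/measurable_EFinP; exact: mgf.
rewrite (eq_integral (fun y => (gf th y)%:E)); first exact: Hth.
by move=> y /set_mem Yy /=; rewrite ger0_norm // gf_ge0.
Qed.

Definition Zf th : R := (\int[nu]_(y in Ys) gf th y)%R.

Lemma PsiE th : Ps th = ln (Zf th).
Proof. by []. Qed.

Lemma ZfE th : Th th -> (\int[nu]_(y in Ys) (gf th y)%:E)%E = (Zf th)%:E.
Proof.
move=> Hth; rewrite /Zf /Rintegral fineK //.
by apply: integral_fune_fin_num => //; exact: int_gf.
Qed.

Lemma Zf_gt0 th : Th th -> 0 < Zf th.
Proof.
move=> Hth; rewrite lt_neqAle Rintegral_ge0 ?andbT; last by move=> y Yy; exact: gf_ge0.
apply/negP => /eqP Z0.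
have : (\int[nu]_(y in Ys) `|(gf th y)%:E| = 0)%E.
  rewrite (eq_integral (fun y => (gf th y)%:E)); first by rewrite ZfE // -Z0.
  by move=> y /set_mem Yy /=; rewrite ger0_norm // gf_ge0.
have H := @ae_eq_integral_abs _ _ _ nu Ys mYs (EFin \o gf th).
have /H{}H : measurable_fun Ys (EFin \o gf th) by apply/measurable_EFinP; exact: mgf.
move=> /H{}H.
have Hae : {ae nu, forall y, Ys y -> 0 < h y -> dotv 0 (T y) = 1}.
  apply: filterS H => y Hy Yy hy; exfalso.
  move: (Hy Yy) => /= [] /eqP.
  by rewrite /gf mulf_eq0 (gt_eqF hy) (gt_eqF (expR_gt0 _)).
have [_ /eqP] := (proj2 Hreg) 0 1 Hae; by rewrite oner_eq0.
Qed.
Lemma open_dir th (i : 'I_p) : Th th ->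
  exists2 e, 0 < e & forall s, `|s| < e -> Th (s *: delta_mx 0 i + th).
Proof.
move=> Hth.
have : nbhs th Th by move: (proj1 Hreg); rewrite openE => /(_ _ Hth).
move=> /nbhs_normP [e e0 He].
set d : 'rV[R]_p := delta_mx 0 i.
have d0 : 0 < `|d|.
  rewrite normr_gt0; apply/eqP => /matrixP /(_ 0 i); rewrite !mxE !eqxx /=.
  by move/eqP; rewrite oner_eq0.
exists (e / `|d|); first by rewrite divr_gt0.
move=> s hs; apply: He => /=.
by rewrite opprD addrC -addrA addNr addr0 normrN normrZ -ltr_pdivlMr.
Qed.
Local Notation int f := (nu.-integrable Ys (EFin \o f)).

Lemma iD (f g : borelRV R m -> R) : int f -> int g -> int (fun y => f y + g y).
Proof.
move=> If Ig; apply: (eq_integrable mYs _ _ _ (integrableD mYs If Ig)).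
by move=> y _ /=; rewrite EFinD.
Qed.

Lemma iZ (k : R) (f : borelRV R m -> R) : int f -> int (fun y => k * f y).
Proof.
move=> If; apply: (eq_integrable mYs _ _ _ (integrableZl mYs k If)).
by move=> y _ /=; rewrite EFinM.
Qed.

Lemma iE (f g : borelRV R m -> R) : (forall y, Ys y -> f y = g y) -> int f -> int g.
Proof.
move=> fg If; apply: (eq_integrable mYs _ _ _ If).
by move=> y /set_mem Yy /=; rewrite fg.
Qed.

Lemma ile (f g : borelRV R m -> R) : measurable_fun Ys f ->
  (forall y, Ys y -> `|f y| <= `|g y|) -> int g -> int f.
Proof.
move=> mf fg Ig; apply: (@le_integrable _ _ _ nu Ys mYs (EFin \o f) (EFin \o g) _ _ Ig).
  by apply/measurable_EFinP.
by move=> y Yy /=; rewrite lee_fin fg.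
Qed.

Lemma gf_shift th (i : 'I_p) s y :
  gf (s *: delta_mx 0 i + th) y = gf th y * expR (s * T y 0 i).
Proof. by rewrite /gf dotvDl dotvZl dotv_delta expRD; ring. Qed.

Lemma int_u th (i : 'I_p) : Th th -> int (fun y => T y 0 i * gf th y).
Proof.
move=> Hth; have [e e0 He] := open_dir i Hth.
set d := e / 2.
have d0 : 0 < d by rewrite divr_gt0.
have de : `|d| < e by rewrite gtr0_norm // /d ltr_pdivrMr //; lra.
have nde : `|- d| < e by rewrite normrN.
have I1 := int_gf (He _ de); have I2 := int_gf (He _ nde).
apply: (@ile _ (fun y => d^-1 * (gf (d *: delta_mx 0 i + th) y + gf ((- d) *: delta_mx 0 i + th) y))).
- by apply: measurable_funM => //; exact: mgf.
- move=> y Yy; rewrite !gf_shift normrM (ger0_norm (gf_ge0 _ Yy)).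
  rewrite [X in _ <= X]ger0_norm; last first.
    by apply: mulr_ge0; [rewrite invr_ge0 ltW | apply: addr_ge0; apply: mulr_ge0; rewrite ?gf_ge0 ?expR_ge0].
  rewrite mulNr -mulrDr [X in _ <= X]mulrCA [X in X <= _]mulrC ler_wpM2l ?gf_ge0 //.
  by rewrite ler_pdivlMl // abs_le_exp.
- exact: (iZ _ (iD I1 I2)).
Qed.

Local Notation RI f := (\int[nu]_(y in Ys) f y)%R.

Lemma int_sum (I : Type) (s : seq I) (f : I -> borelRV R m -> R) :
  (forall j, int (f j)) -> int (fun y => \sum_(j <- s) f j y).
Proof.
move=> If; elim: s => [|j s IH].
  by apply: (iE (f := fun _ => 0)); [move=> y _; rewrite big_nil | exact: integrable0].
by apply: (iE (f := fun y => f j y + \sum_(k <- s) f k y)); [move=> y _; rewrite big_cons | exact: iD].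
Qed.

Lemma RI_sum (I : Type) (s : seq I) (f : I -> borelRV R m -> R) :
  (forall j, int (f j)) -> RI (fun y => \sum_(j <- s) f j y) = \sum_(j <- s) RI (f j).
Proof.
move=> If; elim: s => [|j s IH].
  rewrite big_nil; under eq_Rintegral do rewrite big_nil.
  by rewrite /Rintegral integral0.
rewrite big_cons -IH; under eq_Rintegral do rewrite big_cons.
by rewrite RintegralD //; exact: int_sum.
Qed.

Lemma RI_E (f : borelRV R m -> R) : int f -> (\int[nu]_(y in Ys) (f y)%:E)%E = (RI f)%:E.
Proof. by move=> If; rewrite /Rintegral fineK //; exact: integrable_fin_num. Qed.

Lemma fdensE th y : Th th -> fdens nu Ys h T th y = gf th y / Zf th.
Proof.
move=> Hth; rewrite /fdens PsiE expRD expRN lnK ?mulrA //.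
by rewrite posrE; exact: Zf_gt0.
Qed.

Definition mean th : 'rV[R]_p := \row_j (RI (fun y => T y 0 j * gf th y) / Zf th).

Lemma Lpt th a c y : Th th ->
  (c + dotv a (T y)) * fdens nu Ys h T th y =
  (Zf th)^-1 * (c * gf th y + \sum_(j < p) a 0 j * (T y 0 j * gf th y)).
Proof.
move=> Hth; rewrite fdensE // [gf th y / _]mulrC mulrCA; congr (_ * _).
rewrite mulrDl /dotv mulr_suml; congr (_ + _).
by apply: eq_bigr => j _; rewrite -mulrA.
Qed.

Lemma Lint th a c : Th th -> int (fun y => (c + dotv a (T y)) * fdens nu Ys h T th y).
Proof.
move=> Hth; apply: (iE (f := fun y => (Zf th)^-1 * (c * gf th y + \sum_(j < p) a 0 j * (T y 0 j * gf th y)))).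
  by move=> y _; rewrite Lpt.
apply: iZ; apply: iD; first exact/iZ/int_gf.
by apply: int_sum => j; apply: iZ; exact: int_u.
Qed.

Lemma Lval th a c : Th th ->
  (\int[nu]_(y in Ys) ((c + dotv a (T y)) * fdens nu Ys h T th y)%:E)%E =
  (c + dotv a (mean th))%:E.
Proof.
move=> Hth; rewrite RI_E; last exact: Lint.
congr (_%:E).
under eq_Rintegral do rewrite Lpt //.
have Zg := Zf_gt0 Hth.
rewrite RintegralZl //; last first.
  apply: iD; first exact/iZ/int_gf.
  by apply: int_sum => j; apply: iZ; exact: int_u.
rewrite RintegralD //; last 2 first.
- exact/iZ/int_gf.
- by apply: int_sum => j; apply: iZ; exact: int_u.
rewrite RintegralZl //; last exact: int_gf.
rewrite RI_sum; last by move=> j; apply: iZ; exact: int_u.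
rewrite mulrDr /Zf mulrCA mulVf ?gt_eqF // mulr1; congr (_ + _).
rewrite /dotv mulr_sumr; apply: eq_bigr => j _.
rewrite RintegralZl //; last exact: int_u.
by rewrite mxE /Zf; ring.
Qed.

Lemma fdens_aux (hh A A' P P' : R) :
  hh * expR (A' - P') = hh * expR (A - P) * expR ((- P' + P) + (A' - A)).
Proof. by rewrite -mulrA -expRD; congr (_ * expR _); ring. Qed.

Lemma fdens_ge0 th y : Ys y -> 0 <= fdens nu Ys h T th y.
Proof. by move=> Yy; rewrite /fdens mulr_ge0 ?expR_ge0 ?h_ge0. Qed.

Lemma Jensen th th' : Th th -> Th th' ->
  Ps th + dotv (th' - th) (mean th) <= Ps th'.
Proof.
move=> Hth Hth'.
have H1 := Lval 0 1 Hth'.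
have H2 := Lval (th' - th) (1 - Ps th' + Ps th) Hth.
rewrite dotv0l addr0 in H1.
have : (((1 - Ps th' + Ps th) + dotv (th' - th) (mean th))%:E <= 1%:E)%E.
  rewrite -H1 -H2.
  apply: (le_integral mYs (Lint (th' - th) (1 - Ps th' + Ps th) Hth) (Lint 0 1 Hth')).
  move=> y /set_mem Yy /=; rewrite lee_fin dotv0l addr0 mul1r.
  have -> : fdens nu Ys h T th' y =
     fdens nu Ys h T th y * expR ((- Ps th' + Ps th) + dotv (th' - th) (T y)).
    by rewrite /fdens dotvBl; exact: (fdens_aux (h y) (dotv th (T y)) (dotv th' (T y)) (Ps th) (Ps th')).
  rewrite mulrC ler_wpM2l ?fdens_ge0 //.
  apply: le_trans (expR_ge1Dx _); rewrite !addrA lexx //.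
rewrite lee_fin; move: (Ps th) (Ps th') (dotv (th' - th) (mean th)) => a b c H; lra.
Qed.

Lemma grad th : Th th -> gradPsi nu Ys h T th = mean th.
Proof.
move=> Hth; apply/rowP => i; rewrite !mxE.
have [e e0 He] := open_dir i Hth.
set d := e / 4.
have d0 : 0 < d by rewrite divr_gt0.
pose f := fun (t : R) (y : borelRV R m) => gf th y * expR (t * T y 0 i).
pose F := fun t => RI (f t).
have gfs t : gf (t *: delta_mx 0 i + th) = f t by apply/funext => y; rewrite gf_shift.
have PsF t : Ps (t *: delta_mx 0 i + th) = ln (F t) by rewrite PsiE /Zf gfs.
have Ps0 : Ps th = ln (F 0) by rewrite -PsF scale0r add0r.
have F0 : F 0 = Zf th by apply: eq_Rintegral => y _; rewrite /f mul0r expR0 mulr1.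
have Fpos : 0 < F 0 by rewrite F0 Zf_gt0.
have -> : derive Ps th (delta_mx 0 i) = derive ((@ln R) \o F) 0 1.
  have E : (fun s : R => s^-1 *: ((Ps \o shift th) (s *: delta_mx 0 i) - Ps th)) =
           (fun s : R => s^-1 *: ((((@ln R) \o F) \o shift 0) (s *: 1) - ((@ln R) \o F) 0)).
    apply/funext => s /=.
    have -> : s%:A = s :> R by exact: mulr1.
    by rewrite PsF Ps0 addr0.
  by rewrite /derive E.
have Ia : `]-d, d[%classic (0 : R).
  by rewrite /= in_itv /= oppr_lt0 d0.
have itvP t : `]-d, d[%classic t -> `|t| < d.
  by rewrite /= in_itv /= => /andP[t1 t2]; rewrite ltr_norml t1 t2.
have de t : `|t| < d -> `|t| < e.
  by move=> td; apply: (lt_le_trans td); rewrite /d ler_pdivrMr //; lra.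
have intf t : `]-d, d[%classic t -> int (f t).
  by move=> /itvP /de /He /int_gf; rewrite gfs.
have isd (t : R) (y : borelRV R m) : is_derive t 1 (f ^~ y) (gf th y * (expR (t * T y 0 i) * T y 0 i)).
  exact: is_derive_cexp.
have derf (t : R) (y : borelRV R m) : `]-d, d[%classic t -> Ys y -> derivable (f ^~ y) t 1.
  by move=> _ _; have [] := isd t y.
have d1f (t : R) (y : borelRV R m) : partial1of2 f t y = gf th y * (expR (t * T y 0 i) * T y 0 i).
  by rewrite partial1of2E; have [_ ->] := isd t y.
pose G := fun y => `| d^-1 * (gf ((2 * d) *: delta_mx 0 i + th) y + gf ((- (2 * d)) *: delta_mx 0 i + th) y) |.
have G_ge0 y : 0 <= G y by exact: normr_ge0.
have h2 : `|2 * d| < e by rewrite gtr0_norm ?mulr_gt0 // /d; lra.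
have h2' : `|- (2 * d)| < e by rewrite normrN.
have Gpos y : Ys y -> 0 <= d^-1 * (gf ((2 * d) *: delta_mx 0 i + th) y + gf ((- (2 * d)) *: delta_mx 0 i + th) y).
  by move=> Yy; apply: mulr_ge0; [rewrite invr_ge0 ltW | apply: addr_ge0; exact: gf_ge0].
have intG : int G.
  apply: (iE (f := fun y => d^-1 * (gf ((2 * d) *: delta_mx 0 i + th) y + gf ((- (2 * d)) *: delta_mx 0 i + th) y))).
    by move=> y Yy; rewrite /G ger0_norm // Gpos.
  exact: (iZ _ (iD (int_gf (He _ h2)) (int_gf (He _ h2')))).
have G_ub (t : R) (y : borelRV R m) : `]-d, d[%classic t -> Ys y -> `|partial1of2 f t y| <= G y.
  move=> /itvP td Yy; rewrite d1f /G (ger0_norm (Gpos y Yy)) !gf_shift.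
  rewrite normrM (ger0_norm (gf_ge0 _ Yy)) normrM (ger0_norm (expR_ge0 _)).
  rewrite mulNr -mulrDr [X in _ <= X]mulrCA ler_wpM2l ?gf_ge0 // mulrC [d^-1 * _]mulrC.
  exact: absexp_le (ltW td).
have dF : derivable F 0 1 := derivable_under_integral mYs Ia intf derf G_ge0 intG G_ub.
have dln : derivable (@ln R) (F 0) 1 by have [] := is_derive1_ln Fpos.
rewrite -derive1E (@derive1_comp R F (@ln R) 0 dF dln).
rewrite derive1E; have [_ ->] := is_derive1_ln Fpos.
rewrite (differentiation_under_integral mYs Ia intf derf G_ge0 intG G_ub).
rewrite F0 mulrC; congr (_ / _); apply: eq_Rintegral => y _.
by rewrite d1f mul0r expR0 mul1r mulrC.
Qed.

Lemma kl_aux (hh A Ah P Ph : R) : 0 < hh ->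
  hh * expR (A - P) * ln (hh * expR (A - P) / (hh * expR (Ah - Ph))) =
  ((Ph - P) + (A - Ah)) * (hh * expR (A - P)).
Proof.
move=> h0; rewrite invfM mulrACA mulfV ?gt_eqF // mul1r -expRN -expRD expRK.
by rewrite mulrC; congr (_ * _); ring.
Qed.

Lemma kl_aux0 (A B c : R) : 0 * A * ln (0 * A / (0 * B)) = c * (0 * A).
Proof. by rewrite !mul0r mulr0. Qed.

Lemma KLval th thh : Th th ->
  KL_fam nu Ys h T th thh = ((Ps thh - Ps th) + dotv (th - thh) (mean th))%:E.
Proof.
move=> Hth; rewrite -Lval //; apply: eq_integral => y /set_mem Yy; congr (_%:E).
have [h0|hp] : h y = 0 \/ 0 < h y.
  by move: (h_ge0 Yy); rewrite le_eqVlt => /orP[/eqP <-|]; [left|right].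
  by rewrite /fdens h0; exact: kl_aux0.
rewrite /fdens dotvBl.
exact: (kl_aux (dotv th (T y)) (dotv thh (T y)) (Ps th) (Ps thh) hp).
Qed.

Lemma Eval (n k : nat) (lam : 'rV[R]_k -> 'rV[R]_n -> 'rV[R]_p) xhat w th : Th th ->
  E_fam nu Ys h T th (fun y => loss_lam nu Ys h T lam xhat y w) =
  (Ps (lam w xhat) + dotv (- lam w xhat) (mean th))%:E.
Proof.
move=> Hth; rewrite -Lval //; apply: eq_integral => y _; congr (_%:E).
by rewrite /loss_lam dotvNl dotvC.
Qed.

Lemma main_sec (n k : nat) (lam : 'rV[R]_k -> 'rV[R]_n -> 'rV[R]_p) (xhat : 'rV[R]_n)
  (w : 'rV[R]_k) (thetahat : 'rV[R]_p) (rho gam : R) (Hgam : 0 < gam)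
  (Hsol_dom : Th (thetahat - gam^-1 *: lam w xhat))
  (Hsol : Ps (thetahat - gam^-1 *: lam w xhat)
          + gam^-1 * dotv (gradPsi nu Ys h T (thetahat - gam^-1 *: lam w xhat))
                          (lam w xhat)
          = Ps thetahat - rho) :
  let thetastar := thetahat - gam^-1 *: lam w xhat in
  KL_ball nu Ys h T thetahat rho thetastar /\
  E_fam nu Ys h T thetastar (fun y => loss_lam nu Ys h T lam xhat y w)
  = ereal_sup [set E_fam nu Ys h T theta (fun y => loss_lam nu Ys h T lam xhat y w)
              | theta in KL_ball nu Ys h T thetahat rho].
Proof.
move=> ts.
rewrite -/ts in Hsol_dom Hsol.
have Hts : Th ts := Hsol_dom.
rewrite (grad Hts) in Hsol.
have dts : ts - thetahat = - (gam^-1 *: lam w xhat) by rewrite /ts addrAC subrr add0r.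
have Hkl : KL_fam nu Ys h T ts thetahat = rho%:E.
  rewrite (KLval _ Hts) dts dotvNl dotvZl dotvC; congr (_%:E).
  move: Hsol; move: (Ps ts) (Ps thetahat) (dotv (mean ts) (lam w xhat)) (gam^-1) => a b c g H.
  lra.
have Hball : KL_ball nu Ys h T thetahat rho ts by split => //; rewrite Hkl.
split => //.
apply/eqP; rewrite eq_le; apply/andP; split.
  by apply: ereal_sup_ubound; exists ts.
apply: ge_ereal_sup => x [th [Hth Hklth] <-].
rewrite (Eval _ _ _ Hth) (Eval _ _ _ Hts) lee_fin lerD2l !dotvNl lerN2.
rewrite (KLval _ Hth) lee_fin in Hklth.
have J := Jensen Hth Hts.
move: Hklth J; rewrite /ts !dotvBl dotvZl.
rewrite (dotvC (mean ts)) in Hsol.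
move: Hsol; rewrite /ts.
move: (Ps (thetahat - gam^-1 *: lam w xhat)) (Ps thetahat) (Ps th) => Pst Ph Pt.
move: (dotv (lam w xhat) (mean (thetahat - gam^-1 *: lam w xhat))) => B.
move: (dotv (lam w xhat) (mean th)) (dotv thetahat (mean th)) (dotv th (mean th)) => A dh dt.
move=> H1 H2 H3.
have gi : 0 < gam^-1 by rewrite invr_gt0.
have : gam^-1 * B <= gam^-1 * A by move: (gam^-1) gi H1 H2 H3 => g gi' H1 H2 H3; lra.
by rewrite ler_pM2l.
Qed.

End EF.

Unset Implicit Arguments.
Set Strict Implicit.

Theorem propositionC3 (R : realType) (m p n k : nat)
  (nu : {measure set (borelRV R m) -> \bar R})
  (Ys : set (borelRV R m)) (mYs : measurable Ys)
  (h : borelRV R m -> R) (T : borelRV R m -> 'rV[R]_p)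
  (mh : measurable_fun Ys h) (h_ge0 : forall y, Ys y -> 0 <= h y)
  (mT : forall i : 'I_p, measurable_fun Ys (fun y => T y 0 i))
  (Hreg : regular_family nu Ys h T)
  (Xs : set 'rV[R]_n) (xhat : 'rV[R]_n) (Hxhat : Xs xhat)
  (Ws : set 'rV[R]_k)
  (lam : 'rV[R]_k -> 'rV[R]_n -> 'rV[R]_p)
  (lam_cont : {within Ws `*` Xs, continuous (fun z => lam z.1 z.2)})
  (lam_Theta : forall w x, Ws w -> Xs x -> Theta nu Ys h T (lam w x))
  (thetahat : 'rV[R]_p) (Hthetahat : Theta nu Ys h T thetahat)
  (w : 'rV[R]_k) (Hw : Ws w) (rho : R) (Hrho : 0 < rho)
  (gam : R) (Hgam : 0 < gam)
  (Hsol_dom : Theta nu Ys h T (thetahat - gam^-1 *: lam w xhat))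
  (Hsol : Psi nu Ys h T (thetahat - gam^-1 *: lam w xhat)
          + gam^-1 * dotv (gradPsi nu Ys h T (thetahat - gam^-1 *: lam w xhat))
                          (lam w xhat)
          = Psi nu Ys h T thetahat - rho) :
  let thetastar := thetahat - gam^-1 *: lam w xhat in
  KL_ball nu Ys h T thetahat rho thetastar /\
  E_fam nu Ys h T thetastar (fun y => loss_lam nu Ys h T lam xhat y w)
  = ereal_sup [set E_fam nu Ys h T theta (fun y => loss_lam nu Ys h T lam xhat y w)
              | theta in KL_ball nu Ys h T thetahat rho].
Proof.
exact: (main_sec mYs mh h_ge0 mT Hreg Hgam Hsol_dom Hsol).
Qed.
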